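(* Let $(G,\Lambda)$ be a pseudo free self-similar action. Then $\Lambda$ is $G$-aperiodic if and only if every cycline triple is trivial, i.e. every $(\mu,g,\nu)\in\mathcal{C}_{G,\Lambda}$ satisfies $\mu=\nu$ and $g=1_G$.
   Context: Let $k\ge1$. A $k$-graph is a countable small category $\Lambda$ together with a functor $d:\Lambda\to\mathbb{N}^k$ (the degree map) with the unique factorization property: for every $\mu\in\Lambda$ and $m,n\in\mathbb{N}^k$ with $d(\mu)=m+n$ there are unique $\alpha,\beta\in\Lambda$ with $d(\alpha)=m$, $d(\beta)=n$ and $\mu=\alpha\beta$. Write $\Lambda^n=d^{-1}(n)$; $\Lambda^0$ is identified with the set of objects (vertices), and $r,s$ denote range and source. For $v\in\Lambda^0$ and $n\in\mathbb{N}^k$ write $v\Lambda=r^{-1}(v)$, $v\Lambda^n=v\Lambda\cap\Lambda^n$. All $k$-graphs are assumed row-finite ($|v\Lambda^n|<\infty$) and source-free ($v\Lambda^n\neq\emptyset$) for all $v,n$. Infinite paths: let $\Omega_k=\{(p,q)\in\mathbb{N}^k\times\mathbb{N}^k:p\le q\}$ with $r(p,q)=(p,p)$, $s(p,q)=(q,q)$, $(p,q)(q,m)=(p,m)$, $d(p,q)=q-p$. An infinite path is a degree-preserving functor $x:\Omega_k\to\Lambda$; $\Lambda^\infty$ is the set of infinite paths, $v\Lambda^\infty=\{x:x(0,0)=v\}$, the shift is $\sigma^n(x)(p,q)=x(p+n,q+n)$, and for $\mu\in\Lambda$, $x\in s(\mu)\Lambda^\infty$, $\mu x$ is the unique infinite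 path $y$ with $y(0,d(\mu))=\mu$ and $\sigma^{d(\mu)}(y)=x$. Self-similar actions: $G$ is a countable discrete group. A self-similar action $(G,\Lambda)$ consists of an action of $G$ on $\Lambda$ by automorphisms (bijections preserving $d$, $r$, $s$), written $g\cdot\mu$, and a restriction map $G\times\Lambda\to G$, $(g,\mu)\mapsto g|_\mu$, such that for all $g,h\in G$, $v\in\Lambda^0$ and $\mu,\nu$ with $s(\mu)=r(\nu)$: $g\cdot(\mu\nu)=(g\cdot\mu)(g|_\mu\cdot\nu)$; $g|_v=g$; $g|_{\mu\nu}=(g|_\mu)|_\nu$; $1_G|_\mu=1_G$; $(gh)|_\mu=g|_{h\cdot\mu}\,h|_\mu$. For $x\in\Lambda^\infty$, $(g\cdot x)(p,q)=g|_{x(0,p)}\cdot x(p,q)$. The action is pseudo free if $g\cdot\mu=\mu$ and $g|_\mu=1_G$ for some $\mu\in\Lambda$ imply $g=1_G$. $G$-aperiodicity: an infinite path $x$ is $G$-aperiodic if for all $g\in G$ and $p,q\in\mathbb{N}^k$ with $g\neq1_G$ or $p\neq q$ one has $\sigma^p(x)\neq g\cdot\sigma^q(x)$; otherwise $x$ is $G$-periodic. $\Lambda$ is $G$-aperiodic if for every $v\in\Lambda^0$ there is a $G$-aperiodic $x\in v\Lambda^\infty$, and $G$-periodic otherwise. Cycline triples: a triple $(\mu,g,\nu)\in\Lambda\times G\times\Lambda$ with $s(\mu)=g\cdot s(\nu)$ is cycline if $\mu(g\cdot x)=\nu x$ for all $x\in s(\nu)\Lambda^\infty$; $\mathcal{C}_{G,\Lambda}$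 is the set of cycline triples. Triples $(\mu,1_G,\mu)$ are cycline and are called trivial. *)

(* Defs.v *)
From HB Require Import structures.
From mathcomp Require Import all_boot.
From Stdlib Require List.
Set Implicit Arguments.
Unset Strict Implicit.
Unset Printing Implicit Defensive.

Local Open Scope group_scope.

Definition countable (T : Type) : Prop := exists f : T -> nat, injective f.

Definition deg (k : nat) := {ffun 'I_k -> nat}.
Definition deg0 {k} : deg k := [ffun=> 0%N].
Definition degadd {k} (m n : deg k) : deg k := [ffun i => (m i + n i)%N].
(* truncated pointwise subtraction; only used when n <= m *)
Definition degsub {k} (m n : deg k) : deg k := [ffun i => (m i - n i)%N].
Definition degle {k} (m n : deg k) : bool := [forall i, m i <= n i].

(* ---------- k-graphs ----------
   A countable small category (vertices = objects, paths = morphisms, with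
   composition [kcomp] meaningful on composable pairs s mu = r nu) together
   with a degree functor kd into N^k having the unique factorization property. *)
Record kgraph (k : nat) := KGraph {
  kvert : Type;
  kpath : Type;
  kvert_countable : countable kvert;
  kpath_countable : countable kpath;
  kr : kpath -> kvert;
  ks : kpath -> kvert;
  kid : kvert -> kpath;
  kcomp : kpath -> kpath -> kpath;
  kd : kpath -> deg k;
  kr_id : forall v, kr (kid v) = v;
  ks_id : forall v, ks (kid v) = v;
  kid_l : forall mu, kcomp (kid (kr mu)) mu = mu;
  kid_r : forall mu, kcomp mu (kid (ks mu)) = mu;
  kr_comp : forall mu nu, ks mu = kr nu -> kr (kcomp mu nu) = kr mu;
  ks_comp : forall mu nu, ks mu = kr nu -> ks (kcomp mu nu) = ks nu;
  kcomp_assoc : forall mu nu la, ks mu = kr nu -> ks nu = kr la ->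
      kcomp (kcomp mu nu) la = kcomp mu (kcomp nu la);
  kd_id : forall v, kd (kid v) = deg0;
  kd_comp : forall mu nu, ks mu = kr nu -> kd (kcomp mu nu) = degadd (kd mu) (kd nu);
  kfactor : forall mu (m n : deg k), kd mu = degadd m n ->
      exists al be, [/\ kd al = m, kd be = n, ks al = kr be, mu = kcomp al be &
        forall al' be', kd al' = m -> kd be' = n -> ks al' = kr be' ->
          mu = kcomp al' be' -> al' = al /\ be' = be]
}.

Arguments kr {k} _ _.
Arguments ks {k} _ _.
Arguments kid {k} _ _.
Arguments kcomp {k} _ _ _.
Arguments kd {k} _ _.

Definition row_finite {k} (L : kgraph k) : Prop :=
  forall (v : kvert L) (n : deg k), exists s : list (kpath L),
    forall mu, kr L mu = v -> kd L mu = n -> List.In mu s.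

Definition source_free {k} (L : kgraph k) : Prop :=
  forall (v : kvert L) (n : deg k), exists mu, kr L mu = v /\ kd L mu = n.

(* ---------- Infinite paths ----------
   A degree-preserving functor x : Omega_k -> Lambda, represented by its
   values x p q on morphisms (p,q), p <= q (values for p not <= q are junk). *)
Definition ipath {k} (L : kgraph k) := deg k -> deg k -> kpath L.

Definition is_ipath {k} (L : kgraph k) (x : ipath L) : Prop :=
  [/\ forall p q, degle p q -> kd L (x p q) = degsub q p,
      forall p, x p p = kid L (kr L (x p p)) &
      forall p q m, degle p q -> degle q m ->
        ks L (x p q) = kr L (x q m) /\ x p m = kcomp L (x p q) (x q m)].

Definition ieq {k} (L : kgraph k) (x y : ipath L) : Prop :=
  forall p q, degle p q -> x p q = y p q.

Definition ishift {k} (L : kgraph k) (n : deg k) (x : ipath L) : ipath L :=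
  fun p q => x (degadd p n) (degadd q n).

Definition iconcat {k} (L : kgraph k) (mu : kpath L) (x y : ipath L) : Prop :=
  [/\ is_ipath y, y deg0 (kd L mu) = mu & ieq (ishift (kd L mu) y) x].

Record ssaction (G : groupType) {k} (L : kgraph k) := SSAction {
  actP : G -> kpath L -> kpath L;
  actV : G -> kvert L -> kvert L;
  res : G -> kpath L -> G;
  actP1 : forall mu, actP 1 mu = mu;
  actPM : forall g h mu, actP (g * h) mu = actP g (actP h mu);
  actV1 : forall v, actV 1 v = v;
  actVM : forall g h v, actV (g * h) v = actV g (actV h v);
  actP_bij : forall g, bijective (actP g);
  actV_bij : forall g, bijective (actV g);
  actP_id : forall g v, actP g (kid L v) = kid L (actV g v);
  actP_d : forall g mu, kd L (actP g mu) = kd L mu;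
  actP_r : forall g mu, kr L (actP g mu) = actV g (kr L mu);
  actP_s : forall g mu, ks L (actP g mu) = actV g (ks L mu);
  ss_comp : forall g mu nu, ks L mu = kr L nu ->
      actP g (kcomp L mu nu) = kcomp L (actP g mu) (actP (res g mu) nu);
  res_vert : forall g v, res g (kid L v) = g;
  res_comp : forall g mu nu, ks L mu = kr L nu ->
      res g (kcomp L mu nu) = res (res g mu) nu;
  res_one : forall mu, res 1 mu = 1;
  res_mul : forall g h mu, res (g * h) mu = res g (actP h mu) * res h mu
}.

Arguments actP {G k L} _ _ _.
Arguments actV {G k L} _ _ _.
Arguments res {G k L} _ _ _.

Section Defs.
Variables (G : groupType) (k : nat) (L : kgraph k) (A : ssaction G L).

Definition pseudo_free : Prop :=
  forall (g : G) (mu : kpath L), actP A g mu = mu -> res A g mu = 1 -> g = 1.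

Definition iact (g : G) (x : ipath L) : ipath L :=
  fun p q => actP A (res A g (x deg0 p)) (x p q).

Definition G_aperiodic_path (x : ipath L) : Prop :=
  forall (g : G) (p q : deg k), (g <> 1 \/ p <> q) ->
    ~ ieq (ishift p x) (iact g (ishift q x)).

Definition G_aperiodic : Prop :=
  forall v : kvert L, exists x : ipath L,
    [/\ is_ipath x, x deg0 deg0 = kid L v & G_aperiodic_path x].

Definition cycline (mu : kpath L) (g : G) (nu : kpath L) : Prop :=
  ks L mu = actV A g (ks L nu) /\
  forall x : ipath L, is_ipath x -> x deg0 deg0 = kid L (ks L nu) ->
    exists y : ipath L, iconcat mu (iact g x) y /\ iconcat nu x y.

End Defs.

(* Main.v *)
Require Import Defs.
From HB Require Import structures.
From mathcomp Require Import all_boot zify.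
From Stdlib Require Import ClassicalEpsilon Classical.

Set Implicit Arguments.
Unset Strict Implicit.
Unset Printing Implicit Defensive.

Lemma degleP k (p q : deg k) : degle p q <-> forall i : 'I_k, p i <= q i.
Proof. split; [by move/forallP | by move=> H; apply/forallP]. Qed.

Ltac degs := apply/ffunP => ?; rewrite !ffunE /=; lia.

Section Seg.
Variables (k : nat) (L : kgraph k).
Local Notation P := (kpath L).
Local Notation comp := (kcomp L).
Local Notation d := (kd L).

Definition splitP (l : P) m (ab : P * P) :=
  [/\ d ab.1 = m, d ab.2 = degsub (d l) m, ks L ab.1 = kr L ab.2 & l = comp ab.1 ab.2].

Definition dsplit (l : P) m : P * P := epsilon (inhabits (l, l)) (splitP l m).

Lemma dsplit_spec l m : degle m (d l) -> splitP l m (dsplit l m).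
Proof.
move=> /degleP H; rewrite /dsplit; apply: epsilon_spec.
have E : d l = degadd m (degsub (d l) m).
  by apply/ffunP => i; rewrite !ffunE /=; have := H i; lia.
have [al [be [H1 H2 H3 H4 _]]] := kfactor E.
by exists (al, be).
Qed.

Lemma dsplit_uniq l m a b : degle m (d l) -> d a = m -> ks L a = kr L b ->
  l = comp a b -> dsplit l m = (a, b).
Proof.
move=> /degleP H ha hab hl.
have E : d l = degadd m (degsub (d l) m).
  by apply/ffunP => i; rewrite !ffunE /=; have := H i; lia.
have [al [be [H1 H2 H3 H4 U]]] := kfactor E.
have db : d b = degsub (d l) m.
  rewrite hl (kd_comp hab) ha; degs.
have [s1 s2 s3 s4] := dsplit_spec (m:=m) (l:=l) (proj2 (degleP _ _) H).
have [-> ->] := U _ _ ha db hab hl.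
by have [e1 e2] := U _ _ s1 s2 s3 s4; rewrite -e1 -e2; case: (dsplit l m).
Qed.

Definition seg (l : P) (p q : deg k) : P := (dsplit (dsplit l p).2 (degsub q p)).1.

Lemma seg_unique l p q a b c : degle p q -> degle q (d l) ->
  ks L a = kr L b -> ks L b = kr L c -> d a = p -> d b = degsub q p ->
  l = comp a (comp b c) -> seg l p q = b.
Proof.
move=> /degleP pq /degleP ql ab bc da db hl.
have ab' : ks L a = kr L (comp b c) by rewrite kr_comp.
have dl : d l = degadd p (degadd (degsub q p) (d c)).
  by rewrite hl (kd_comp ab') (kd_comp bc) da db.
rewrite /seg (dsplit_uniq (m:=p) _ da ab' hl) /=; last first.
  by apply/degleP => i; rewrite dl !ffunE /=; lia.
rewrite (dsplit_uniq (m:=degsub q p) _ db bc) //.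
by apply/degleP => i; rewrite (kd_comp bc) db !ffunE /=; lia.
Qed.

Lemma seg_decomp l p q : degle p q -> degle q (d l) ->
  exists a b c, [/\ ks L a = kr L b /\ ks L b = kr L c, d a = p, d b = degsub q p,
    d c = degsub (d l) q & l = comp a (comp b c) /\ seg l p q = b].
Proof.
move=> /degleP pq /degleP ql.
have pl : degle p (d l) by apply/degleP => i; have := pq i; have := ql i; lia.
have [s1 s2 s3 s4] := dsplit_spec pl.
set a := (dsplit l p).1 in s1 s3 s4 *; set r := (dsplit l p).2 in s2 s3 s4 *.
have qr : degle (degsub q p) (d r) by apply/degleP => i; rewrite s2 !ffunE /=; have := ql i; lia.
have [t1 t2 t3 t4] := dsplit_spec qr.
exists a, (dsplit r (degsub q p)).1, (dsplit r (degsub q p)).2; split => //.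
- by split => //; rewrite s3 {1}t4 kr_comp.
- rewrite t2 s2; apply/ffunP => i; rewrite !ffunE /=; have := pq i; lia.
- by split; [rewrite -t4 | ].
Qed.

Lemma deg0_id (m : P) : d m = deg0 -> m = kid L (kr L m).
Proof.
move=> dm.
have E : d m = degadd deg0 deg0 by rewrite dm; degs.
have [al [be [_ _ _ _ U]]] := kfactor E.
have h1 := U (kid L (kr L m)) m (kd_id _) dm (ks_id _) (esym (kid_l _)).
have h2 := U m (kid L (ks L m)) dm (kd_id _) (esym (kr_id _)) (esym (kid_r _)).
by rewrite {1}h2.1 -h1.1.
Qed.


Lemma degle_trans (p q r : deg k) : degle p q -> degle q r -> degle p r.
Proof. move=> /degleP h1 /degleP h2; apply/degleP => i; have := h1 i; have := h2 i; lia. Qed.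

Lemma degle_refl (p : deg k) : degle p p.
Proof. by apply/degleP. Qed.

Lemma degle0 (p : deg k) : degle deg0 p.
Proof. by apply/degleP => i; rewrite ffunE. Qed.

Lemma ks_comp' a b : ks L a = kr L b -> ks L (comp a b) = ks L b.
Proof. exact: ks_comp. Qed.

Lemma seg_deg l p q : degle p q -> degle q (d l) -> d (seg l p q) = degsub q p.
Proof. by move=> pq ql; have [a [b [c [_ _ db _ [_ ->]]]]] := seg_decomp pq ql. Qed.

Lemma seg_pp l p : degle p (d l) -> seg l p p = kid L (kr L (seg l p p)).
Proof.
move=> pl; apply: deg0_id; rewrite seg_deg //; first degs.
exact: degle_refl.
Qed.

Lemma seg_full l : seg l deg0 (d l) = l.
Proof.
apply: (@seg_unique l deg0 (d l) (kid L (kr L l)) l (kid L (ks L l))).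
- exact: degle0.
- exact: degle_refl.
- by rewrite ks_id.
- by rewrite kr_id.
- by rewrite kd_id.
- degs.
- by rewrite kid_r kid_l.
Qed.

Lemma seg_00 l : seg l deg0 deg0 = kid L (kr L l).
Proof.
apply: (@seg_unique l deg0 deg0 (kid L (kr L l)) (kid L (kr L l)) l).
- exact: degle_refl.
- exact: degle0.
- by rewrite ks_id kr_id.
- by rewrite ks_id.
- by rewrite kd_id.
- rewrite kd_id; degs.
- by rewrite !kid_l.
Qed.

Lemma seg_ks_end l p : degle p (d l) -> ks L (seg l p (d l)) = ks L l.
Proof.
move=> pl; have [a [b [c [[ab bc] da db dc [hl ->]]]]] := seg_decomp pl (degle_refl _).
have c0 : d c = deg0 by rewrite dc; degs.
rewrite hl ks_comp; last by rewrite kr_comp.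
rewrite ks_comp // bc (deg0_id c0) ks_id kr_id //.
Qed.

Lemma seg_comp l p q m : degle p q -> degle q m -> degle m (d l) ->
  ks L (seg l p q) = kr L (seg l q m) /\ seg l p m = comp (seg l p q) (seg l q m).
Proof.
move=> pq qm ml.
have pm := degle_trans pq qm.
have [a [X [c [[aX Xc] da dX dc [hl ->]]]]] := seg_decomp pm ml.
have qX : degle (degsub q p) (d X).
  by rewrite dX; move: pq qm => /degleP pq /degleP qm; apply/degleP => i; rewrite !ffunE /=; have := pq i; have := qm i; lia.
have [t1 t2 t3 t4] := dsplit_spec qX.
set B := (dsplit X (degsub q p)).1 in t1 t3 t4 *.
set C := (dsplit X (degsub q p)).2 in t2 t3 t4 *.
have Cc : ks L C = kr L c by rewrite -Xc t4 ks_comp.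
have aB : ks L a = kr L B by rewrite aX t4 kr_comp.
have e1 : l = comp a (comp B (comp C c)).
  by rewrite hl {1}t4 kcomp_assoc.
have sB : seg l p q = B.
  apply: (seg_unique _ _ aB _ da t1 e1) => //; first exact: degle_trans qm ml.
  by rewrite kr_comp.
have e2 : l = comp (comp a B) (comp C c).
  by rewrite e1 -kcomp_assoc // kr_comp.
have sC : seg l q m = C.
  apply: (@seg_unique l q m (comp a B) C c) => //.
  - by rewrite ks_comp.
  - rewrite (kd_comp aB) da t1; move: pq => /degleP pq; apply/ffunP => i; rewrite !ffunE /=; have := pq i; lia.
  - rewrite t2 dX; move: pq qm => /degleP pq /degleP qm; apply/ffunP => i; rewrite !ffunE /=; have := pq i; have := qm i; lia.
by rewrite sB sC.
Qed.

Definition ext (a b : P) := exists be, ks L a = kr L be /\ b = comp a be.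

Lemma ext_refl a : ext a a.
Proof. by exists (kid L (ks L a)); rewrite kr_id kid_r. Qed.

Lemma ext_trans a b c : ext a b -> ext b c -> ext a c.
Proof.
move=> [x [ax ->]] [y [xy ->]].
have xy' : ks L x = kr L y by move: xy; rewrite ks_comp.
exists (comp x y); split; first by rewrite kr_comp.
by rewrite kcomp_assoc.
Qed.

Lemma ext_deg a b : ext a b -> degle (d a) (d b).
Proof.
move=> [x [ax ->]]; rewrite (kd_comp ax); apply/degleP => i; rewrite !ffunE /=; lia.
Qed.

Lemma seg_ext a b s t : ext a b -> degle s t -> degle t (d a) -> seg b s t = seg a s t.
Proof.
move=> ab st ta.
have [A1 [A2 [A3 [[h12 h23] d1 d2 d3 [ha ->]]]]] := seg_decomp st ta.
move: ab => [be [abe hb]].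
have A3b : ks L A3 = kr L be by rewrite -abe ha ks_comp ?ks_comp // kr_comp.
apply: (@seg_unique b s t A1 A2 (comp A3 be)) => //.
- exact: degle_trans ta (ext_deg (ex_intro _ be (conj abe hb))).
- by rewrite kr_comp.
- rewrite hb ha !kcomp_assoc //; by rewrite ?kr_comp ?ks_comp.
Qed.


End Seg.

Section IPath.
Variables (k : nat) (L : kgraph k).
Local Notation P := (kpath L).
Local Notation comp := (kcomp L).
Local Notation d := (kd L).

Lemma ipath_seg (x : ipath L) s t M : is_ipath x -> degle s t -> degle t M ->
  x s t = seg (x deg0 M) s t.
Proof.
move=> [H1 H2 H3] st tM.
have sM := degle_trans st tM.
have [e1 e2] := H3 _ _ _ (degle0 s) sM.
have [e3 e4] := H3 _ _ _ st tM.
apply/esym; apply: (seg_unique (a:=x deg0 s) (b:=x s t) (c:=x t M)) => //.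
- rewrite H1 ?degle0 //; apply/degleP => i; move/degleP: tM => /(_ i); rewrite !ffunE /=; lia.
- by rewrite e1 e4 kr_comp.
- by rewrite H1 ?degle0 //; degs.
- by rewrite H1.
- by rewrite e2 e4.
Qed.

Definition dsum (q : deg k) : nat := \sum_(i < k) q i.

Lemma dsum_ge (q : deg k) i : q i <= dsum q.
Proof. by rewrite /dsum (bigD1 i) //= leq_addr. Qed.

Section Chain.
Variable c : nat -> P.
Hypothesis hc1 : forall n, ext (c n) (c n.+1).
Hypothesis hc2 : forall n (i : 'I_k), n <= d (c n) i.

Definition lim : ipath L := fun p q => seg (c (dsum q)) p q.

Lemma chain_ext n m : n <= m -> ext (c n) (c m).
Proof.
move=> nm; rewrite -(subnKC nm); elim: (m - n) => [|j IH]; first by rewrite addn0; exact: ext_refl.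
by rewrite addnS; apply: ext_trans IH (hc1 _).
Qed.

Lemma le_dsum (q : deg k) : degle q (d (c (dsum q))).
Proof. apply/degleP => i; exact: leq_trans (dsum_ge q i) (hc2 _ _). Qed.

Lemma lim_seg n s t : degle s t -> degle t (d (c n)) -> lim s t = seg (c n) s t.
Proof.
move=> st tn; rewrite /lim.
have h1 := chain_ext (leq_maxl n (dsum t)).
have h2 := chain_ext (leq_maxr n (dsum t)).
by rewrite -(seg_ext h2 st (le_dsum t)) (seg_ext h1 st tn).
Qed.

Lemma lim_ipath : is_ipath lim.
Proof.
split.
- move=> p q pq; rewrite /lim seg_deg //; exact: le_dsum.
- move=> p; rewrite /lim {1}seg_pp //; exact: le_dsum.
- move=> p q m pq qm.
  have mN := le_dsum m.
  have qN := degle_trans qm mN.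
  rewrite (lim_seg pq qN) (lim_seg qm mN) (lim_seg (degle_trans pq qm) mN).
  exact: seg_comp.
Qed.

Lemma lim_0 n : lim deg0 (d (c n)) = c n.
Proof. by rewrite (lim_seg (n:=n)) ?seg_full //; [exact: degle0 | exact: degle_refl]. Qed.

End Chain.

Lemma ipath_facts (x : ipath L) p q m : is_ipath x -> degle p q -> degle q m ->
  ks L (x p q) = kr L (x q m) /\ x p m = comp (x p q) (x q m).
Proof. by move=> [_ _ H3]; apply: H3. Qed.

Lemma ipath_kr (x : ipath L) p : is_ipath x -> kr L (x deg0 p) = kr L (x deg0 deg0).
Proof.
move=> hx; have [e1 e2] := ipath_facts hx (degle_refl deg0) (degle0 p).
by rewrite e2 kr_comp.
Qed.

Definition cst (n : nat) : deg k := [ffun=> n].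

Section Concat.
Variables (rho : P) (z : ipath L).
Hypothesis hz : is_ipath z.
Hypothesis hz0 : z deg0 deg0 = kid L (ks L rho).

Definition cc n := comp rho (z deg0 (cst n)).

Lemma rho_z n : ks L rho = kr L (z deg0 n).
Proof. by rewrite ipath_kr // hz0 kr_id. Qed.

Lemma cc_ext n : ext (cc n) (cc n.+1).
Proof.
have le1 : degle (cst n) (cst n.+1) by apply/degleP => i; rewrite !ffunE.
have [e1 e2] := ipath_facts hz (degle0 _) le1.
exists (z (cst n) (cst n.+1)); split; first by rewrite /cc ks_comp; [exact: e1 | exact: rho_z].
rewrite /cc e2 kcomp_assoc //; exact: rho_z.
Qed.

Lemma cc_deg n (i : 'I_k) : n <= d (cc n) i.
Proof.
case: hz => H1 _ _.
rewrite /cc (kd_comp (rho_z (cst n))) H1 ?degle0 // !ffunE /=. lia.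
Qed.

Definition concat := lim cc.

Lemma concat_ipath : is_ipath concat.
Proof. exact: lim_ipath cc_ext cc_deg. Qed.

Lemma cc0 : cc 0 = rho.
Proof.
rewrite /cc.
have -> : cst 0 = deg0 by apply/ffunP => i; rewrite !ffunE.
by rewrite hz0 kid_r.
Qed.

Lemma concat_seg s t : degle s t -> degle t (d rho) -> concat s t = seg rho s t.
Proof.
move=> st tr; rewrite /concat (lim_seg cc_ext cc_deg (n:=0)) ?cc0 //.
Qed.

Lemma concat_0 : concat deg0 (d rho) = rho.
Proof. by rewrite concat_seg ?seg_full //; [exact: degle0 | exact: degle_refl]. Qed.

Lemma concat_shift : ieq (ishift (d rho) concat) z.
Proof.
move=> a b ab; rewrite /ishift.
set n := dsum b.
have bn : degle b (cst n) by apply/degleP => i; rewrite ffunE; exact: dsum_ge.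
have [e1 e2] := ipath_facts hz (degle0 a) (degle_trans ab bn).
have [e3 e4] := ipath_facts hz ab bn.
case: hz => H1 _ _.
have ab' : degle (degadd a (d rho)) (degadd b (d rho)).
  by move/degleP: ab => ab; apply/degleP => i; rewrite !ffunE /=; have := ab i; lia.
have bN : degle (degadd b (d rho)) (d (cc n)).
  move/degleP: bn => bn; apply/degleP => i.
  rewrite /cc (kd_comp (rho_z _)) H1 ?degle0 // !ffunE /=.
  by have := bn i; rewrite ffunE; lia.
rewrite /concat (lim_seg cc_ext cc_deg ab' bN).
have rz := rho_z a.
apply: (seg_unique (a:=comp rho (z deg0 a)) (b:=z a b) (c:=z b (cst n))) => //.
- rewrite ks_comp //; move: e1; rewrite e4 kr_comp //.
- rewrite (kd_comp rz) H1 ?degle0 //; degs.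
- rewrite H1 //; degs.
- have e1' : ks L (z deg0 a) = kr L (comp (z a b) (z b (cst n))) by rewrite -e4.
  rewrite /cc e2 e4 -kcomp_assoc //.
Qed.

End Concat.

End IPath.




Lemma degle_add k (p q n : deg k) : degle p q -> degle (degadd p n) (degadd q n).
Proof. move/degleP => h; apply/degleP => i; rewrite !ffunE /=; have := h i; lia. Qed.

Lemma shift_ipath k (L : kgraph k) (x : ipath L) n : is_ipath x -> is_ipath (ishift n x).
Proof.
move=> [H1 H2 H3]; split.
- move=> p q pq; rewrite /ishift H1 ?degle_add //.
  move/degleP: pq => pq; apply/ffunP => i; rewrite !ffunE /=; have := pq i; lia.
- by move=> p; rewrite /ishift; apply: H2.
- by move=> p q m pq qm; rewrite /ishift; apply: H3; apply: degle_add.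
Qed.

Section Dir1.
Variables (G : groupType) (k : nat) (L : kgraph k) (A : ssaction G L).
Hypothesis hpf : pseudo_free A.

Lemma dir1 : G_aperiodic A ->
  forall mu g nu, cycline A mu g nu -> mu = nu /\ g = 1%g.
Proof.
move=> ap mu g nu [hs hc].
have [x [hx x00 xap]] := ap (ks L nu).
have [y [[hy y0m ym] [_ y0n yn]]] := hc x hx x00.
set m := kd L mu in y0m ym *; set n := kd L nu in y0n yn *.
have [H1 H2 H3] := hx.
set g' := res A g (x deg0 n).
have key : ieq (ishift m x) (iact A g' (ishift n x)).
  move=> a b ab; rewrite /ishift /iact.
  rewrite -yn; last exact: degle_add.
  rewrite /ishift.
  have -> : degadd (degadd a m) n = degadd (degadd a n) m by degs.
  have -> : degadd (degadd b m) n = degadd (degadd b n) m by degs.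
  have -> : degadd deg0 n = n by degs.
  have := ym (degadd a n) (degadd b n) (degle_add n ab); rewrite /ishift /iact => ->.
  have an : degle n (degadd a n) by apply/degleP => i; rewrite !ffunE /=; lia.
  have [e1 e2] := H3 _ _ _ (degle0 n) an.
  by rewrite e2 res_comp.
case: (classic (g' = 1%g /\ m = n)) => [[g1 mn] | nn]; last first.
  by exfalso; apply: (xap g' m n) => //; apply: not_and_or.
split; first by rewrite -y0m -y0n mn.
apply: (hpf (mu := x deg0 n)) => //.
have := ym deg0 n (degle0 n); rewrite /ishift /iact x00 res_vert => <-.
rewrite mn -(yn deg0 n (degle0 n)) /ishift.
by [].
Qed.

End Dir1.




Ltac dle := let i := fresh "i" in
  apply/degleP => i;
  repeat match goal with H : is_true (degle _ _) |- _ => move/degleP: H => H end;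
  repeat match goal with H : forall _ : ordinal _, _ |- _ => move: (H i); clear H end;
  rewrite ?ffunE /=; lia.

Section Exists.
Variables (k : nat) (L : kgraph k).
Hypothesis hsf : source_free L.

Definition pick (u : kvert L) : kpath L :=
  epsilon (inhabits (kid L u)) (fun b => kr L b = u /\ kd L b = cst k 1).

Lemma pick_spec u : kr L (pick u) = u /\ kd L (pick u) = cst k 1.
Proof. rewrite /pick. apply: (epsilon_spec (inhabits (kid L u)) (fun b => kr L b = u /\ kd L b = cst k 1)). exact: hsf. Qed.

Variable v : kvert L.

Fixpoint ch n := match n with 0 => kid L v | n'.+1 => kcomp L (ch n') (pick (ks L (ch n'))) end.

Lemma ch_ext n : ext (ch n) (ch n.+1).
Proof. by exists (pick (ks L (ch n))); rewrite (pick_spec _).1. Qed.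

Lemma ch_deg n : kd L (ch n) = cst k n.
Proof.
elim: n => [|n IH] /=; first by rewrite kd_id; degs.
by rewrite kd_comp ?(pick_spec _).1 // IH (pick_spec _).2; degs.
Qed.

Lemma ch_deg' n (i : 'I_k) : n <= kd L (ch n) i.
Proof. by rewrite ch_deg ffunE. Qed.

Lemma exists_ipath : exists x, is_ipath x /\ x deg0 deg0 = kid L v.
Proof.
exists (lim ch); split; first exact: lim_ipath ch_ext ch_deg'.
rewrite (lim_seg ch_ext ch_deg' (n:=0)) /= ?seg_00 ?kr_id //; try exact: degle_refl.
exact: degle0.
Qed.

End Exists.

Lemma not_ieq k (L : kgraph k) (X Y : ipath L) : ~ ieq X Y ->
  exists a b, degle a b /\ X a b <> Y a b.
Proof.
move=> h; apply: NNPP => h2; apply: h => a b ab; apply: NNPP => h3.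
by apply: h2; exists a, b.
Qed.

Section Step.
Variables (G : groupType) (k : nat) (L : kgraph k) (A : ssaction G L).
Hypothesis hpf : pseudo_free A.
Hypothesis hsf : source_free L.
Hypothesis hcyc : forall mu g nu, cycline A mu g nu -> mu = nu /\ g = 1%g.

Definition good (g : G) (p q : deg k) (l : kpath L) :=
  forall x, is_ipath x -> x deg0 (kd L l) = l -> ~ ieq (ishift p x) (iact A g (ishift q x)).

Lemma step l D g p q : (g <> 1%g \/ p <> q) ->
  exists l', [/\ ext l l', degle D (kd L l') & good g p q l'].
Proof.
move=> gpq.
pose E : deg k := [ffun i => maxn (maxn (p i) (q i)) (D i)].
have [al [ral dal]] := hsf (ks L l) E.
pose rho := kcomp L l al.
have lal : ks L l = kr L al by rewrite ral.
pose N := kd L rho.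
have dN : N = degadd (kd L l) E by rewrite /N /rho kd_comp // dal.
have pN : degle p N by rewrite dN; dle.
have qN : degle q N by rewrite dN; dle.
have DN : degle D N by rewrite dN; dle.
pose mu := seg rho p N.
pose nu0 := seg rho q N.
pose g' := res A g nu0.
have dmu : kd L mu = degsub N p := seg_deg pN (degle_refl N).
have dnu0 : kd L nu0 = degsub N q := seg_deg qN (degle_refl N).
have ksmu : ks L mu = ks L rho := seg_ks_end pN.
have ksnu0 : ks L nu0 = ks L rho := seg_ks_end qN.
have e0p : degadd deg0 p = p by degs.
have e0q : degadd deg0 q = q by degs.
have eNq : degadd (degsub N q) q = N by move: qN; rewrite /degle => /forallP qN'; apply/ffunP => i; rewrite !ffunE /=; have := qN' i; lia.
have eNp : degadd (degsub N p) p = N by move: pN; rewrite /degle => /forallP pN'; apply/ffunP => i; rewrite !ffunE /=; have := pN' i; lia.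
have claim : exists z, [/\ is_ipath z, z deg0 deg0 = kid L (ks L rho) &
    ~ ieq (ishift p (concat rho z)) (iact A g (ishift q (concat rho z)))].
  apply: NNPP => Hn.
  have Hall : forall z, is_ipath z -> z deg0 deg0 = kid L (ks L rho) ->
      ieq (ishift p (concat rho z)) (iact A g (ishift q (concat rho z))).
    by move=> z hz hz0; apply: NNPP => hneq; apply: Hn; exists z.
  have Fnu : forall z, is_ipath z -> z deg0 deg0 = kid L (ks L rho) ->
      ishift p (concat rho z) deg0 (degsub N q) = actP A g nu0.
    move=> z hz hz0.
    have [H1 H2 H3] := concat_ipath hz hz0.
    rewrite (Hall z hz hz0 deg0 (degsub N q) (degle0 _)) /iact /ishift e0q eNq.
    rewrite H2 res_vert (concat_seg hz hz0 qN (degle_refl N)) //.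
  have [z0 [hz0 hz00]] := exists_ipath hsf (ks L rho).
  have vert : ks L (actP A g nu0) = actV A g' (ks L mu).
    have [H1 H2 H3] := concat_ipath hz0 hz00.
    set w0 := concat rho z0 in H1 H2 H3 Fnu *.
    have h := Hall z0 hz0 hz00 (degsub N q) (degsub N q) (degle_refl _).
    move: h; rewrite /iact /ishift e0q eNq (concat_seg hz0 hz00 qN (degle_refl N)) -/nu0 -/g'.
    rewrite -/w0 (H2 N) actP_id => hT.
    have le1 : degle p (degadd (degsub N q) p) by dle.
    have [f1 _] := H3 _ _ _ le1 (degle_refl _).
    have [f2 _] := H3 _ _ _ pN (degle_refl N).
    rewrite -(Fnu z0 hz0 hz00) /ishift e0p f1 hT kr_id -f2.
    by rewrite /w0 (concat_seg hz0 hz00 pN (degle_refl N)).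
  have cyc : cycline A (actP A g nu0) g' mu.
    split => // x hx hx0.
    rewrite ksmu in hx0.
    have [H1 H2 H3] := concat_ipath hx hx0.
    have hsh := concat_shift hx hx0.
    have Hx := Hall x hx hx0.
    have hy : is_ipath (ishift p (concat rho x)) by apply: shift_ipath; exact: concat_ipath.
    exists (ishift p (concat rho x)); split; split => //.
    - by rewrite actP_d dnu0; apply: Fnu.
    - move=> a b ab; rewrite actP_d dnu0 /ishift.
      have ab' : degle (degadd a (degsub N q)) (degadd b (degsub N q)) by exact: degle_add.
      have := Hx _ _ ab'; rewrite /ishift => ->.
      have ea : degadd (degadd a (degsub N q)) q = degadd a N.
        by move/degleP: qN => qN'; apply/ffunP => i; rewrite !ffunE /=; have := qN' i; lia.
      have eb : degadd (degadd b (degsub N q)) q = degadd b N.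
        by move/degleP: qN => qN'; apply/ffunP => i; rewrite !ffunE /=; have := qN' i; lia.
      rewrite /iact e0q ea eb.
      have aN : degle N (degadd a N) by dle.
      have [f1 f2] := H3 _ _ _ qN aN.
      rewrite f2 res_comp // (concat_seg hx hx0 qN (degle_refl N)) -/nu0 -/g'.
      have := hsh deg0 a (degle0 a); rewrite /ishift.
      rewrite -/N; have -> : degadd deg0 N = N by degs.
      move=> ->; have := hsh a b ab; rewrite /ishift -/N => ->; done.
    - by rewrite /ishift dmu e0p eNp (concat_seg hx hx0 pN (degle_refl N)).
    - rewrite dmu => a b ab; rewrite /ishift.
      have ea : degadd (degadd a (degsub N p)) p = degadd a N.
        by move/degleP: pN => pN'; apply/ffunP => i; rewrite !ffunE /=; have := pN' i; lia.
      have eb : degadd (degadd b (degsub N p)) p = degadd b N.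
        by move/degleP: pN => pN'; apply/ffunP => i; rewrite !ffunE /=; have := pN' i; lia.
      by rewrite ea eb; apply: hsh.
  have [e1 e2] := hcyc cyc.
  have epq : p = q.
    have := congr1 (kd L) e1; rewrite actP_d dnu0 dmu => /ffunP h.
    apply/ffunP => i; have := h i; rewrite !ffunE /=.
    move/degleP: pN => /(_ i); move/degleP: qN => /(_ i); lia.
  have g1 : g = 1%g.
    apply: (hpf (mu := nu0)) => //.
    by rewrite e1 /mu /nu0 epq.
  by case: gpq.
have [z [hz hz0 hne]] := claim.
have [H1 H2 H3] := concat_ipath hz hz0.
have [a [b [ab hab]]] := not_ieq hne.
pose M : deg k := [ffun i => maxn (maxn (N i) (b i + p i)) (b i + q i)].
have NM : degle N M by rewrite /M; dle.
have c0 : concat rho z deg0 N = rho := concat_0 hz hz0.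
exists (concat rho z deg0 M); split.
- apply: (@ext_trans _ _ _ rho); first by exists al.
  have [f1 f2] := H3 deg0 N M (degle0 N) NM.
  by exists (concat rho z N M); split; [rewrite -f1 c0 | rewrite f2 c0].
- rewrite H1 ?degle0 //; rewrite /M; dle.
- move=> x hx hx0 hieq.
  have dM : kd L (concat rho z deg0 M) = M by rewrite H1 ?degle0 //; degs.
  rewrite dM in hx0.
  have agree : forall s t, degle s t -> degle t M -> x s t = concat rho z s t.
    move=> s t st tM.
    by rewrite (ipath_seg hx st tM) hx0 -(ipath_seg (concat_ipath hz hz0) st tM).
  apply: hab; have := hieq a b ab; rewrite /ishift /iact.
  rewrite !agree //; try exact: degle_add; try (rewrite /M; dle).
Qed.

End Step.



Section Dir2.
Variables (G : groupType) (k : nat) (L : kgraph k) (A : ssaction G L).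
Hypothesis hGc : countable G.
Hypothesis hpf : pseudo_free A.
Hypothesis hsf : source_free L.
Hypothesis hcyc : forall mu g nu, cycline A mu g nu -> mu = nu /\ g = 1%g.

Definition T := (G * deg k * deg k)%type.
Definition f := projT1 (constructive_indefinite_description _ hGc).
Lemma f_inj : injective f.
Proof. exact: (projT2 (constructive_indefinite_description _ hGc)). Qed.

Definition enc (t : T) : nat := pickle (f t.1.1, pickle t.1.2, pickle t.2).

Lemma enc_inj : injective enc.
Proof.
move=> [[g1 p1] q1] [[g2 p2] q2] /(pcan_inj pickleK) [/f_inj -> /(pcan_inj pickleK) -> /(pcan_inj pickleK) ->].
done.
Qed.

Definition dec (n : nat) : T := epsilon (inhabits (1%g, deg0, deg0)) (fun t => enc t = n).

Lemma decK t : dec (enc t) = t.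
Proof.
apply: enc_inj; rewrite /dec; apply: (epsilon_spec (inhabits (1%g, deg0, deg0)) (fun t' => enc t' = enc t)).
by exists t.
Qed.

Definition stP (n : nat) (l l' : kpath L) :=
  [/\ ext l l', degle (cst k n.+1) (kd L l') &
      ((dec n).1.1 <> 1%g \/ (dec n).1.2 <> (dec n).2) -> good A (dec n).1.1 (dec n).1.2 (dec n).2 l'].

Lemma stP_ex n l : exists l', stP n l l'.
Proof.
case: (classic ((dec n).1.1 <> 1%g \/ (dec n).1.2 <> (dec n).2)) => h.
  have [l' [h1 h2 h3]] := step hpf hsf hcyc l (cst k n.+1) h.
  by exists l'; split.
have [be [rb db]] := hsf (ks L l) (cst k n.+1).
exists (kcomp L l be); split => //.
- by exists be.
- rewrite kd_comp ?rb // db; apply/degleP => i; rewrite !ffunE /=; lia.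
Qed.

Definition stepf n l := epsilon (inhabits l) (stP n l).

Lemma stepf_spec n l : stP n l (stepf n l).
Proof. rewrite /stepf; apply: (epsilon_spec (inhabits l) (stP n l)); exact: stP_ex. Qed.

Variable v : kvert L.
Fixpoint cs n := match n with 0 => kid L v | n'.+1 => stepf n' (cs n') end.

Lemma cs_ext n : ext (cs n) (cs n.+1).
Proof. by have [h _ _] := stepf_spec n (cs n). Qed.

Lemma cs_deg n (i : 'I_k) : n <= kd L (cs n) i.
Proof.
case: n => [|n] //=.
have [_ h _] := stepf_spec n (cs n).
by move/degleP: h => /(_ i); rewrite ffunE.
Qed.

Lemma dir2_v : exists x, [/\ is_ipath x, x deg0 deg0 = kid L v & G_aperiodic_path A x].
Proof.
exists (lim cs); split; first exact: lim_ipath cs_ext cs_deg.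
  rewrite (lim_seg cs_ext cs_deg (n:=0)) /= ?seg_00 ?kr_id //; try exact: degle_refl.
  exact: degle0.
move=> g p q gpq hie.
set n := enc (g, p, q).
have [_ _ h] := stepf_spec n (cs n).
rewrite /n decK /= in h.
apply: (h gpq (lim cs) (lim_ipath cs_ext cs_deg)) => //.
exact: (lim_0 cs_ext cs_deg n.+1).
Qed.

End Dir2.

Theorem proposition3p6 (k : nat) (hk : (0 < k)%N) (L : kgraph k)
    (G : groupType) (A : ssaction G L)
    (hGc : countable G) (hrf : row_finite L) (hsf : source_free L)
    (hpf : pseudo_free A) :
  G_aperiodic A <->
  (forall (mu : kpath L) (g : G) (nu : kpath L),
      cycline A mu g nu -> mu = nu /\ g = 1%g).
Proof.
split; first exact: dir1.
move=> hcyc v; exact: dir2_v.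
Qed.
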